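(* Let $\Lambda,\Delta\in\mathcal T_b$ satisfy $\Delta\cap\Lambda=\emptyset$, $\Delta\cap\Lambda_+=\emptyset$ and $\Lambda_-\cap\Delta_+=\emptyset$, let $\gamma_\Lambda,\gamma_\Delta$ be proper oriented kernels on $\Lambda$ and $\Delta$, and put $\Gamma=\Lambda\cup\Delta$. Then: (i) $\Gamma\in\mathcal T_b$, $\Gamma_+=\Lambda_+\cup(\Delta_+\setminus\Lambda)$ and $\Gamma_-=\Delta_-\cup(\Lambda_-\setminus\Delta)$; (ii) for every $A\in\mathcal F_{S\setminus\Gamma_+}$ the function $\gamma_\Lambda(A,\cdot)$ is $\mathcal F_{S\setminus\Delta_+}$-measurable, so that $\gamma_\Gamma(A,\omega):=\int\gamma_\Lambda(A,\sigma)\,\gamma_\Delta(d\sigma,\omega)$ is well defined, and $\gamma_\Gamma=\gamma_\Delta\gamma_\Lambda$ is a proper oriented kernel on $\Gamma$.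
   Context: $(S,\le)$ is a countable partially ordered set. For $x\in S$ write $x_-=\{y\in S:y<x\}$, $x_+=\{y\in S:y>x\}$. For $\Upsilon\subset S$: $\max(\Upsilon)=\{x\in\Upsilon: y\notin\Upsilon\text{ for all }y>x\}$, $\min(\Upsilon)=\{x\in\Upsilon: y\notin\Upsilon\text{ for all }y<x\}$, the past $\Upsilon_-=\{x\in S\setminus\Upsilon:\exists y\in\Upsilon,\ x<y\}$, the future $\Upsilon_+=\{x\in S\setminus\Upsilon:\exists y\in\Upsilon,\ x>y\}$, and the outer time $\Upsilon^*=\{x\in S: x\text{ is comparable with no }y\in\Upsilon\}$. Standing assumptions: for every $x\in S$, $\max(x_-)$ and $\min(x_+)$ are finite, every $y<x$ satisfies $y\le y_0<x$ for some $y_0\in\max(x_-)$, every $z>x$ satisfies $z\ge z_0>x$ for some $z_0\in\min(x_+)$; and $S$ has no minimal element. A finite set $\Lambda\subset S$ is a time box if $\Lambda_-\cap\Lambda_+=\emptyset$; $\mathcal T_b$ is the set of time boxes. $(E,\mathcal E)$ is a measurable space, $\Omega=E^S$ with product $\sigma$-algebra $\mathcal F$; $\mathcal F_\Upsilon$ is generated by coordinates in $\Upsilon$. A proper oriented kernel on $\Lambda\in\mathcal T_b$ is a map $\gamma_\Lambda:\mathcal F_{S\setminus\Lambda_+}\times\Omega\to[0,1]$ such that (a) $\gamma_\Lambda(\cdot,\omega)$ is a probability measure for each $\omega$; (b) $\gamma_\Lambda(A,\cdot)$ is $\mathcal F_{\Lambda_-\cup\Lambda^*}$-measurable for each $A\in\mathcal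 F_{S\setminus\Lambda_+}$; (c) $\gamma_\Lambda(A,\cdot)$ is $\mathcal F_{\Lambda_-}$-measurable for each $A\in\mathcal F_\Lambda$; (d) $\gamma_\Lambda(B,\omega)=\mathbf 1_B(\omega)$ for all $B\in\mathcal F_{\Lambda_-\cup\Lambda^*}$. *)

(* Defs.v *)
From HB Require Import structures.
From mathcomp Require Import all_boot all_order all_algebra.
From mathcomp Require Import all_classical all_reals all_analysis.
From mathcomp Require Import measurable_realfun.
Set Implicit Arguments. Unset Strict Implicit. Unset Printing Implicit Defensive.
Import Order.TTheory GRing.Theory Num.Theory.
Local Open Scope classical_set_scope.
Local Open Scope ring_scope.
Local Open Scope order_scope.

Section Poset.
Context {disp : Order.disp_t} {S : porderType disp}.

Definition below (x : S) : set S := [set y | y < x].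
Definition above (x : S) : set S := [set y | x < y].

Definition setmax (U : set S) : set S :=
  [set x | U x /\ forall y, x < y -> ~ U y].
Definition setmin (U : set S) : set S :=
  [set x | U x /\ forall y, y < x -> ~ U y].

Definition past (U : set S) : set S :=
  [set x | ~ U x /\ exists2 y, U y & x < y].
Definition future (U : set S) : set S :=
  [set x | ~ U x /\ exists2 y, U y & y < x].
Definition outer (U : set S) : set S :=
  [set x | forall y, U y -> ~ (x >=< y)].

Definition standing_assumptions : Prop :=
  countable [set: S] /\
  (forall x : S, finite_set (setmax (below x))) /\
  (forall x : S, finite_set (setmin (above x))) /\
  (forall x y : S, y < x -> exists2 y0, setmax (below x) y0 & y <= y0) /\
  (forall x z : S, x < z -> exists2 z0, setmin (above x) z0 & z0 <= z) /\
  (forall x : S, ~ setmin [set: S] x).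

Definition time_box (L : set S) : Prop :=
  finite_set L /\ past L `&` future L = set0.

End Poset.

Section Config.
Context {disp : Order.disp_t} {S : porderType disp}.
Context {dE : measure_display} {E : measurableType dE}.

Definition Omega := S -> E.

Definition coord_gen (U : set S) : set (set Omega) :=
  [set A | exists x, U x /\ exists2 B : set E, measurable B &
                               A = (fun w : Omega => w x) @^-1` B].

Definition sigmaF (U : set S) : set (set Omega) := <<s coord_gen U >>.

Definition OmegaU (U : set S) := g_sigma_algebraType (coord_gen U).

End Config.

Section Kernel.
Context {disp : Order.disp_t} {S : porderType disp}.
Context {dE : measure_display} {E : measurableType dE}.
Context {R : realType}.

(* a candidate kernel on L: for each omega a probability measure on
   F_{S \ L_+}; condition (a) is built into the type. *)
Definition kernel_type (L : set S) :=
  @Omega _ S _ E -> probability (@OmegaU _ S _ E (~` future L)) R.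

(* conditions (b), (c), (d) of a proper oriented kernel *)
Definition proper_oriented_kernel (L : set S) (g : kernel_type L) : Prop :=
  (forall A : set Omega, sigmaF (~` future L) A ->
     measurable_fun [set: OmegaU (past L `|` outer L)]
       (fun w : OmegaU (past L `|` outer L) => (g w A : \bar R))) /\
  (forall A : set Omega, sigmaF L A ->
     measurable_fun [set: OmegaU (past L)]
       (fun w : OmegaU (past L) => (g w A : \bar R))) /\
  (forall (B : set Omega) (w : Omega), sigmaF (past L `|` outer L) B ->
     g w B = (\1_B w)%:E).

End Kernel.

(* Main.v *)
Require Import Defs.
From HB Require Import structures.
From mathcomp Require Import all_boot all_order all_algebra.
From mathcomp Require Import all_classical all_reals all_analysis.
From mathcomp Require Import measurable_realfun.
Set Implicit Arguments. Unset Strict Implicit. Unset Printing Implicit Defensive.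
Import Order.TTheory GRing.Theory Num.Theory.
Local Open Scope classical_set_scope.
Local Open Scope ereal_scope.
Section Gen.
Context {disp : Order.disp_t} {S : porderType disp}.
Context {dE : measure_display} {E : measurableType dE}.
Context {R : realType}.
Local Notation Om := (@Omega disp S dE E).
Local Notation OU := (@OmegaU disp S dE E).
Local Notation sigF := (@sigmaF disp S dE E).

Lemma sF (U : set S) (A : set Om) : sigF U A = @measurable _ (OU U) A.
Proof. by []. Qed.

Lemma sigmaF_mono (U V : set S) : U `<=` V -> sigF U `<=` sigF V.
Proof.
move=> UV; apply: sub_sigma_algebra2 => A [x [Ux HB]]; exists x; split=>//; exact: UV.
Qed.

Lemma mfun_mono (U V : set S) (f : Om -> \bar R) : U `<=` V ->
  measurable_fun [set: OU U] f -> measurable_fun [set: OU V] f.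
Proof. move=> UV mf _ B mB; apply: (sigmaF_mono UV); exact: mf. Qed.

Lemma mindic (U : set S) (B : set Om) : sigF U B ->
  measurable_fun [set: OU U] (fun w => (\1_B w : R)%:E).
Proof. move=> mB; apply/measurable_EFinP; exact: (@measurable_indic _ (OU U)). Qed.

Lemma sigmaF_split (U K : set S) (P : set (set Om)) :
  (forall A1 A2, sigF (U `&` K) A1 -> sigF (U `\` K) A2 -> P (A1 `&` A2)) ->
  (forall A B, A `<=` B -> sigF U A -> sigF U B -> P A -> P B -> P (B `\` A)) ->
  (forall F : (set Om)^nat, nondecreasing_seq F -> (forall n, sigF U (F n)) ->
     (forall n, P (F n)) -> P (\bigcup_n F n)) ->
  forall A, sigF U A -> P A.
Proof.
move=> hG hD hU A hA.
pose G := [set C | exists A1 A2, [/\ sigF (U `&` K) A1, sigF (U `\` K) A2 & C = A1 `&` A2]].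
pose H := [set C | sigF U C /\ P C].
have sK : sigF (U `&` K) `<=` sigF U by apply: sigmaF_mono; exact: subIsetl.
have sK' : sigF (U `\` K) `<=` sigF U by apply: sigmaF_mono; exact: subDsetl.
have GH : <<s G >> `<=` H.
  apply: lambda_system_subset => //.
  - move=> _ _ [A1 [A2 [h1 h2 ->]]] [B1 [B2 [k1 k2 ->]]].
    exists (A1 `&` B1), (A2 `&` B2); split.
    + by rewrite sF; apply: measurableI.
    + by rewrite sF; apply: measurableI.
    + by rewrite setIACA.
  - split => //.
    + by split; [rewrite sF; exact: measurableT| rewrite -(setIT setT); apply: hG; rewrite sF; exact: measurableT].
    + move=> B C CB [mB PB] [mC PC]; split; last exact: hD.
      by rewrite sF; apply: measurableD.
    + move=> F ndF HF; split; last by apply: hU => // n; case: (HF n).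
      by rewrite sF; apply: bigcup_measurable => n _; case: (HF n).
  - move=> _ [A1 [A2 [h1 h2 ->]]]; split; last exact: hG.
    by rewrite sF; apply: measurableI; [exact: sK|exact: sK'].
suff : sigF U `<=` <<s G >> by move=> /(_ _ hA) /GH [].
apply: smallest_sub; first exact: smallest_sigma_algebra.
move=> C [x [Ux [B mB ->]]].
apply: sub_sigma_algebra.
have [Kx|nKx] := pselect (K x).
  exists ((fun w : Om => w x) @^-1` B), setT; split.
  + by apply: sub_sigma_algebra; exists x; split => //; exists B.
  + by rewrite sF; exact: measurableT.
  + by rewrite setIT.
exists setT, ((fun w : Om => w x) @^-1` B); split.
+ by rewrite sF; exact: measurableT.
+ by apply: sub_sigma_algebra; exists x; split => //; exists B.
+ by rewrite setTI.
Qed.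
End Gen.
Section Gen2.
Context {disp : Order.disp_t} {S : porderType disp}.
Context {dE : measure_display} {E : measurableType dE}.
Context {R : realType}.
Local Notation Om := (@Omega disp S dE E).
Local Notation OU := (@OmegaU disp S dE E).
Local Notation sigF := (@sigmaF disp S dE E).

Lemma prob_indic (U : set S) (mu : probability (OU U) R) (A B : set (OU U)) (w : Om) :
  sigF U A -> sigF U B -> mu B = (\1_B w : R)%:E -> mu (~` B) = (\1_(~` B) w : R)%:E ->
  mu (A `&` B) = mu A * (\1_B w : R)%:E.
Proof.
rewrite !sF => mA mB hB hC.
have mB' : measurable (~` B : set (OU U)) by apply: measurableC.
have h : mu A = mu (A `\` B) + mu (A `&` B) := measureDI mu mA mB.
have [wB|nwB] := pselect (B w).
  rewrite indicE mem_set // mule1.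
  have h0 : mu (A `\` B) = 0.
    have le1 : mu (A `\` B) <= mu (~` B).
      by apply: le_measure; rewrite ?inE //; apply: measurableD.
    apply/eqP; rewrite eq_le measure_ge0 andbT (le_trans le1) //.
    by rewrite hC indicE memNset //=; apply; exact: wB.
  by rewrite h h0 add0e.
rewrite indicE memNset // mule0.
have le1 : mu (A `&` B) <= mu B.
  by apply: le_measure; rewrite ?inE //; apply: measurableI.
apply/eqP; rewrite eq_le measure_ge0 andbT (le_trans le1) //.
by rewrite hB indicE memNset.
Qed.

End Gen2.
Section Gen3.
Context {disp : Order.disp_t} {S : porderType disp}.
Context {dE : measure_display} {E : measurableType dE}.
Context {R : realType}.
Local Notation Om := (@Omega disp S dE E).
Local Notation OU := (@OmegaU disp S dE E).
Local Notation sigF := (@sigmaF disp S dE E).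

Lemma prob_diff (U : set S) (mu : probability (OU U) R) (A B : set (OU U)) :
  sigF U A -> sigF U B -> A `<=` B -> mu (B `\` A) = mu B - mu A.
Proof.
rewrite !sF => mA mB AB.
have h : mu (B `\` A) = mu B - mu (B `&` A).
  apply: (measureD (mu:=mu) mB mA).
  by rewrite (le_lt_trans (probability_le1 _ mB)) // ltry.
by rewrite h setIidr.
Qed.

Lemma prob_nd (U : set S) (mu : probability (OU U) R) (F : (set (OU U))^nat) :
  (forall n, sigF U (F n)) -> nondecreasing_seq F ->
  (fun n => mu (F n)) @ \oo --> mu (\bigcup_n F n).
Proof.
move=> mF ndF.
have mU : sigF U (\bigcup_n F n).
  by rewrite sF; apply: bigcup_measurable => n _; exact: mF.
by have := @nondecreasing_cvg_mu _ _ _ mu F mF mU ndF.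
Qed.

Lemma KM (L Tg W : set S) (g : @kernel_type disp S dE E R L)
  (hg : proper_oriented_kernel g)
  (hW : W `<=` ~` future L) (hW2 : W `\` L `<=` past L `|` outer L)
  (hT1 : past L `<=` Tg) (hT2 : W `\` L `<=` Tg) :
  forall A : set Om, sigF W A -> measurable_fun [set: OU Tg] (fun w => g w A).
Proof.
case: hg => hb [hc hd].
have mW : sigF W `<=` sigF (~` future L) by apply: sigmaF_mono.
move=> A hA.
apply: (@sigmaF_split _ _ _ _ W L
   (fun A => measurable_fun [set: OU Tg] (fun w => g w A))) hA.
- move=> A1 A2 h1 h2.
  have m1 : sigF W A1 by apply: (sigmaF_mono _ h1); exact: subIsetl.
  have m2 : sigF (past L `|` outer L) A2 by apply: (sigmaF_mono hW2 h2).
  have m2' : sigF W A2 by apply: (sigmaF_mono _ h2); exact: subDsetl.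
  have e : forall w, g w (A1 `&` A2) = g w A1 * (\1_A2 w : R)%:E.
    move=> w; apply: prob_indic; [exact: mW|exact: mW|exact: hd|].
    by apply: hd; rewrite sF; apply: measurableC.
  rewrite (_ : (fun w => _) = (fun w => g w A1 * (\1_A2 w : R)%:E)); last first.
    by apply/funext => w; exact: e.
  apply: emeasurable_funM.
    apply: (mfun_mono hT1); apply: hc; apply: (sigmaF_mono _ h1); exact: subIsetr.
  by apply: (mfun_mono hT2); exact: mindic.
- move=> A1 B1 AB h1 h2 P1 P2.
  rewrite (_ : (fun w => _) = (fun w => g w B1 - g w A1)); last first.
    by apply/funext => w; apply: prob_diff => //; exact: mW.
  exact: emeasurable_funB.
- move=> F ndF hF PF.
  have h := @emeasurable_fun_cvg _ (OU Tg) R setT (fun n w => g w (F n))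
    (fun w => g w (\bigcup_n F n)) PF.
  apply: h => w _.
  by apply: prob_nd => // n; exact: mW.
Qed.

End Gen3.
Section Gen4.
Context {disp : Order.disp_t} {S : porderType disp}.
Context {dE : measure_display} {E : measurableType dE}.
Context {R : realType}.
Local Notation Om := (@Omega disp S dE E).
Local Notation OU := (@OmegaU disp S dE E).
Local Notation sigF := (@sigmaF disp S dE E).
Import HBNNSimple.

Lemma K2 (L Tg W : set S) (g : @kernel_type disp S dE E R L)
  (hg : proper_oriented_kernel g)
  (hW : W `<=` ~` future L) (hW2 : W `\` L `<=` past L `|` outer L)
  (hT1 : past L `<=` Tg) (hT2 : W `\` L `<=` Tg)
  (f : Om -> \bar R) (f0 : forall s, 0 <= f s)
  (mf : measurable_fun [set: OU W] f) :
  measurable_fun [set: OU Tg] (fun w => \int[g w]_s f s).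
Proof.
pose k_ := nnsfun_approx (@measurableT _ (OU W)) mf.
have mk n : measurable_fun [set: OU (~` future L)] (fun s => (k_ n s)%:E).
  apply: (mfun_mono hW); apply/measurable_EFinP; exact: measurable_funP.
have ndk_ : nondecreasing_seq (k_ : (OU W -> R)^nat) by move=> a b ab; exact/nd_nnsfun_approx.
have k_k z : (k_ n z)%:E @[n --> \oo] --> f z by exact: cvg_nnsfun_approx.
rewrite (_ : (fun x => _) =
    (fun x => limn_esup (fun n => \int[g x]_y (k_ n y)%:E))); last first.
  apply/funext => x.
  transitivity (lim (\int[g x]_y (k_ n y)%:E @[n --> \oo])); last first.
    rewrite is_cvg_limn_esupE//.
    apply: ereal_nondecreasing_is_cvgn => m n mn.
    apply: ge0_le_integral => //.
    all: try (by move=> y _; rewrite lee_fin).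
    all: try (by move=> y _; rewrite lee_fin; exact/lefP/ndk_).
    all: try exact: mk.
  rewrite -monotone_convergence//.
  all: try exact: mk.
  - by apply: eq_integral => y _; apply/esym/cvg_lim => //; exact: k_k.
  - by move=> n y _; rewrite lee_fin.
  - by move=> y _ m n mn; rewrite lee_fin; exact/lefP/ndk_.
apply: measurable_fun_limn_esup => n.
rewrite [X in measurable_fun _ X](_ : _ = (fun x => \int[g x]_y
    (\sum_(r \in range (k_ n))
      r * \1_(k_ n @^-1` [set r]) y)%:E)); last first.
  by apply/funext => x; apply: eq_integral => y _; rewrite fimfunE.
have mpre r : sigF W (k_ n @^-1` [set r]).
  rewrite sF -[X in measurable X]setTI; exact: measurable_funP.
rewrite [X in measurable_fun _ X](_ : _ = (fun x => \sum_(r \in range (k_ n))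
    (\int[g x]_y (r * \1_(k_ n @^-1` [set r]) y)%:E))); last first.
  apply/funext => x; rewrite -ge0_integral_fsum//.
  - by apply: eq_integral => y _; rewrite -fsumEFin.
  - move=> r.
    apply/measurable_EFinP/measurable_funM => //.
    apply/(measurable_indic (D := setT)); apply: (sigmaF_mono hW); exact: mpre.
  - by move=> m y _; rewrite nnfun_muleindic_ge0.
apply: emeasurable_fsum => // r.
rewrite [X in measurable_fun _ X](_ : _ = fun x => r%:E *
    \int[g x]_y (\1_(k_ n @^-1` [set r]) y)%:E); last first.
  apply/funext => x; under eq_integral do rewrite EFinM.
  have [r0|r0] := leP 0%R r.
    rewrite ge0_integralZl//.
    apply/measurable_EFinP; apply/(measurable_indic (D := setT)).
    apply: (sigmaF_mono hW); exact: mpre.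
  rewrite integral0_eq; last first.
    by move=> y _; rewrite preimage_nnfun0// indic0 mule0.
  by rewrite integral0_eq ?mule0// => y _; rewrite preimage_nnfun0// indic0.
apply/measurable_funeM.
rewrite (_ : (fun x => _) = (fun x => g x (k_ n @^-1` [set r]))).
  exact: (KM hg hW hW2 hT1 hT2 (mpre r)).
apply/funext => x; rewrite integral_indic//; last first.
  by apply: (sigmaF_mono hW); exact: mpre.
by rewrite setIT.
Qed.

End Gen4.
Section Comp.
Context {disp : Order.disp_t} {S : porderType disp}.
Context {dE : measure_display} {E : measurableType dE}.
Context {R : realType}.
Local Notation Om := (@Omega disp S dE E).
Local Notation OU := (@OmegaU disp S dE E).
Local Notation sigF := (@sigmaF disp S dE E).
Variables (L D : set S) (gL : @kernel_type disp S dE E R L)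
  (gD : @kernel_type disp S dE E R D).
Hypothesis hsub : sigF (~` future (L `|` D)) `<=` sigF (~` future L).
Hypothesis hm : forall A, sigF (~` future (L `|` D)) A ->
  measurable_fun [set: OU (~` future D)] (fun s => gL s A).
Variable w : Om.

Definition compf (A : set (OU (~` future (L `|` D)))) : \bar R :=
  let _ := hsub in let _ := hm in \int[gD w]_s gL s A.

Lemma compfE A : compf A = \int[gD w]_s gL s A.
Proof. by []. Qed.

Let compf0 : compf set0 = 0.
Proof.
rewrite compfE (eq_integral (cst 0)) ?integral0// => y _.
by rewrite measure0.
Qed.

Let compf_ge0 A : 0 <= compf A.
Proof. by rewrite compfE; exact: integral_ge0. Qed.

Let compf_sa : semi_sigma_additive compf.
Proof.
move=> U mU tU mUU; rewrite [X in _ --> X](_ : _ =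
  \int[gD w]_y (\sum_(n <oo) gL y (U n))); last first.
  rewrite compfE; apply: eq_integral => V _.
  apply/esym/cvg_lim => //; apply: measure_semi_sigma_additive => //.
  - by move=> n; apply: hsub; exact: mU.
  - by apply: hsub; exact: mUU.
apply/cvg_closeP; split.
  by apply: is_cvg_nneseries => n _ _; exact: integral_ge0.
rewrite closeE// integral_nneseries// => n.
by apply: hm; exact: mU.
Qed.

HB.instance Definition _ := isMeasure.Build _ _ R compf compf0 compf_ge0 compf_sa.

Let compf_setT : compf setT = 1.
Proof.
rewrite compfE (eq_integral (cst 1)); last first.
  by move=> y _; exact: probability_setT.
rewrite integral_cst // mul1e; exact: probability_setT.
Qed.

HB.instance Definition _ := Measure_isProbability.Build _ _ R compf compf_setT.

End Comp.
Section PosetFacts.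
Context {disp : Order.disp_t} {S : porderType disp}.


Lemma disj (T : Type) (A B : set T) x : A `&` B = set0 -> A x -> B x -> False.
Proof. by move=> h a b; have : (A `&` B) x by []; rewrite h. Qed.

Lemma not_fut (U : set S) x : ~ U x -> ~ future U x -> (past U `|` outer U) x.
Proof.
move=> nU nF.
have [[y Uy cxy]|no] := pselect (exists2 y, U y & (x >=< y)%O); last first.
  by right => y Uy cxy; apply: no; exists y.
move: cxy => /orP[|] h.
  move: h; rewrite le_eqVlt => /predU1P[exy|xy]; first by rewrite exy in nU.
  by left; split => //; exists y.
move: h; rewrite le_eqVlt => /predU1P[exy|yx]; first by rewrite -exy in nU.
by exfalso; apply: nF; split => //; exists y.
Qed.

Lemma po_nfut (U : set S) x : time_box U -> (past U `|` outer U) x ->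
  ~ U x /\ ~ future U x.
Proof.
move=> [_ hU] [[nU [y Uy xy]]|hO].
  by split => // hF; apply: (disj hU) (hF); split => //; exists y.
split.
  by move=> Ux; apply: (hO x Ux); rewrite /Order.comparable lexx.
by move=> [_ [y Uy yx]]; apply: (hO y Uy); rewrite /Order.comparable (ltW yx) orbT.
Qed.

Variables (L D : set S).
Hypotheses (hL : time_box L) (hD : time_box D)
  (hDL : D `&` L = set0) (hDLf : D `&` future L = set0)
  (hLpDf : past L `&` future D = set0).

Lemma futG : future (L `|` D) = future L `|` (future D `\` L).
Proof.
apply/seteqP; split => x.
  move=> [nG [y [Ly|Dy] yx]].
    by left; split; [move=> ?; apply: nG; left|exists y].
  right; split; last by move=> ?; apply: nG; left.
  by split; [move=> ?; apply: nG; right|exists y].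
move=> [[nL [y Ly yx]]|[[nD [y Dy yx]] nL]].
  split; last by exists y => //; left.
  by move=> [//|Dx]; apply: (disj hDLf Dx); split => //; exists y.
by split; [move=> [] | exists y => //; right].
Qed.

Lemma pastG : past (L `|` D) = past D `|` (past L `\` D).
Proof.
apply/seteqP; split => x.
  move=> [nG [y [Ly|Dy] xy]].
    right; split; last by move=> ?; apply: nG; right.
    by split; [move=> ?; apply: nG; left|exists y].
  by left; split; [move=> ?; apply: nG; right|exists y].
move=> [[nD [y Dy xy]]|[[nL [y Ly xy]] nD]].
  split; last by exists y => //; right.
  move=> [Lx|//]; apply: (disj hDLf Dy); split; last by exists x.
  by move=> Ly; apply: (disj hDL Dy Ly).
by split; [move=> [] | exists y => //; left].
Qed.

Lemma tbG : time_box (L `|` D).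
Proof.
split; first by rewrite finite_setU; split; [case: hL|case: hD].
rewrite pastG futG; apply/seteqP; split => x // [[pD|[pL nD]] [fL|[fD nL]]].
- case: pD => nD [y Dy xy]; case: fL => nL [z Lz zx].
  apply: (disj hDLf Dy); split; last by exists z => //; exact: lt_trans zx xy.
  by move=> Ly; apply: (disj hDL Dy Ly).
- by apply: (disj hD.2 pD).
- by apply: (disj hL.2 pL).
- by apply: (disj hLpDf pL).
Qed.

End PosetFacts.
Section Comp2.
Context {disp : Order.disp_t} {S : porderType disp}.
Context {dE : measure_display} {E : measurableType dE}.
Context {R : realType}.
Local Notation Om := (@Omega disp S dE E).
Local Notation OU := (@OmegaU disp S dE E).
Local Notation sigF := (@sigmaF disp S dE E).
Variables (L D : set S) (gL : @kernel_type disp S dE E R L)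
  (gD : @kernel_type disp S dE E R D).
Hypotheses (hgL : proper_oriented_kernel gL) (hgD : proper_oriented_kernel gD).
Hypothesis hsub : sigF (~` future (L `|` D)) `<=` sigF (~` future L).
Hypothesis hm : forall A, sigF (~` future (L `|` D)) A ->
  measurable_fun [set: OU (~` future D)] (fun s => gL s A).

Lemma GGM (W Tg : set S) (hW : W `<=` ~` future (L `|` D))
  (hWL : W `<=` ~` future L) (hW2 : past L `|` (W `\` L) `<=` ~` future D)
  (hT1 : past D `<=` Tg) (hT2 : (past L `|` (W `\` L)) `\` D `<=` Tg) :
  forall A, sigF W A ->
    measurable_fun [set: OU Tg] (fun w => compf gD hsub hm w A).
Proof.
case: hgL => hb [hc hd].
have mW : sigF W `<=` sigF (~` future (L `|` D)) by apply: sigmaF_mono.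
have mWL : sigF W `<=` sigF (~` future L) by apply: sigmaF_mono.
have WLpo : W `\` L `<=` past L `|` outer L.
  by move=> x [Wx nL]; apply: not_fut => //; exact: hWL.
move=> A hA.
apply: (@sigmaF_split _ _ _ _ W L
   (fun A => measurable_fun [set: OU Tg] (fun w => compf gD hsub hm w A))) hA.
- move=> A1 A2 h1 h2.
  have m1 : sigF W A1 by apply: (sigmaF_mono _ h1); exact: subIsetl.
  have m2 : sigF (past L `|` outer L) A2 by apply: (sigmaF_mono WLpo h2).
  have m2' : sigF W A2 by apply: (sigmaF_mono _ h2); exact: subDsetl.
  have e : forall s, gL s (A1 `&` A2) = gL s A1 * (\1_A2 s : R)%:E.
    move=> s; apply: prob_indic; [exact: mWL|exact: mWL|exact: hd|].
    by apply: hd; rewrite sF; apply: measurableC.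
  rewrite (_ : (fun w => _) = (fun w => \int[gD w]_s (gL s A1 * (\1_A2 s : R)%:E))); last first.
    by apply/funext => w; rewrite compfE; apply: eq_integral => s _; exact: e.
  apply: (K2 hgD hW2) => //.
  + by move=> x [Wx nD]; apply: not_fut => //; exact: hW2.
  + by move=> s; apply: mule_ge0 => //; rewrite lee_fin.
  apply: emeasurable_funM.
    have sUl : past L `<=` past L `|` (W `\` L) by apply: subsetUl.
    apply: (mfun_mono sUl); apply: hc; apply: (sigmaF_mono _ h1); exact: subIsetr.
  have sUr : W `\` L `<=` past L `|` (W `\` L) by apply: subsetUr.
  by apply: (mfun_mono sUr); exact: mindic.
- move=> A1 B1 AB h1 h2 P1 P2.
  rewrite (_ : (fun w => _) = (fun w => compf gD hsub hm w B1 - compf gD hsub hm w A1)); last first.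
    by apply/funext => w; apply: prob_diff => //; exact: mW.
  exact: emeasurable_funB.
- move=> F ndF hF PF.
  have h := @emeasurable_fun_cvg _ (OU Tg) R setT (fun n w => compf gD hsub hm w (F n))
    (fun w => compf gD hsub hm w (\bigcup_n F n)) PF.
  apply: h => w _.
  by apply: prob_nd => // n; exact: mW.
Qed.

End Comp2.
Theorem mainTheorem16
  (disp : Order.disp_t) (S : porderType disp)
  (dE : measure_display) (E : measurableType dE) (R : realType)
  (hS : @standing_assumptions disp S)
  (L D : set S)
  (hL : time_box L) (hD : time_box D)
  (hDL : D `&` L = set0)
  (hDLf : D `&` future L = set0)
  (hLpDf : past L `&` future D = set0)
  (gL : @kernel_type disp S dE E R L) (gD : @kernel_type disp S dE E R D)
  (hgL : proper_oriented_kernel gL) (hgD : proper_oriented_kernel gD) :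
  let G := L `|` D in
  (* (i) *)
  [/\ time_box G,
      future G = future L `|` (future D `\` L) &
      past G = past D `|` (past L `\` D)] /\
  (* (ii) *)
  (forall A : set (@Omega disp S dE E), sigmaF (~` future G) A ->
     measurable_fun [set: OmegaU (~` future D)]
       (fun s : OmegaU (~` future D) => (gL s A : \bar R))) /\
  (exists gG : @kernel_type disp S dE E R G,
     proper_oriented_kernel gG /\
     forall (A : set (@Omega disp S dE E)) (w : @Omega disp S dE E),
       sigmaF (~` future G) A ->
       gG w A = \int[gD w]_s gL s A).
Proof.
move=> G.
have fG := futG hDLf.
have pG := pastG hDL hDLf.
have tG := tbG hL hD hDL hDLf hLpDf.
split; first by split.
have nfGL : ~` future G `<=` ~` future L.
  by move=> x nf fL; apply: nf; rewrite /G fG; left.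
have nfGD : ~` future G `\` L `<=` ~` future D.
  by move=> x [nf nL] fD; apply: nf; rewrite /G fG; right.
have pLD : past L `<=` ~` future D by move=> x pL fD; exact: (disj hLpDf pL fD).
have hsub : @sigmaF disp S dE E (~` future (L `|` D)) `<=` @sigmaF disp S dE E (~` future L).
  exact: sigmaF_mono.
have hm : forall A : set (@Omega disp S dE E), sigmaF (~` future (L `|` D)) A ->
    measurable_fun [set: OmegaU (~` future D)] (fun s => (gL s A : \bar R)).
  have h2 : ~` future G `\` L `<=` past L `|` outer L.
    by move=> x [nf nL]; apply: not_fut => //; exact: nfGL.
  move=> A hA; exact: (KM hgL nfGL h2 pLD nfGD hA).
split; first exact: hm.
exists (fun w => compf gD hsub hm w); split; last by [].
have pDG : past D `<=` past G by move=> x pD; rewrite /G pG; left.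
have pLG : past L `\` D `<=` past G by move=> x pL; rewrite /G pG; right.
split; [|split].
- apply: (GGM hgL hgD) => //.
  + by move=> x [pL|nf]; [exact: pLD|exact: nfGD].
  + by move=> x pD; left; exact: pDG.
  + move=> x [[pL|[nf nL]] nD]; first by left; apply: pLG.
    apply: not_fut; last exact: nf.
    by move=> [].

- apply: (GGM hgL hgD) => //.
  + by move=> x Gx [nG _].
  + move=> x [Lx|Dx] fL; first by case: fL.
    exact: (disj hDLf Dx fL).
  + move=> x [pL|[[Lx|Dx] nL]]; [exact: pLD|by []|].
    by move=> [nD _].
  + by move=> x [[pL|[[Lx|Dx] nL]] nD]; [apply: pLG|by []|by []].
- move=> B w hB.
  have hBL : sigmaF (past L `|` outer L) B.
    apply: (sigmaF_mono _ hB) => x /(po_nfut tG) [nGx nfx].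
    apply: not_fut; first by move=> Lx; apply: nGx; left.
    by move=> fL; apply: nfx; rewrite /G fG; left.
  have hBD : sigmaF (past D `|` outer D) B.
    apply: (sigmaF_mono _ hB) => x /(po_nfut tG) [nGx nfx].
    apply: not_fut; first by move=> Dx; apply: nGx; right.
    move=> fD; apply: nfx; rewrite /G fG; right; split => // Lx.
    by apply: nGx; left.
  transitivity (\int[gD w]_s gL s B); first by [].
  rewrite (eq_integral (fun s : OmegaU (~` future D) => (\1_B s : R)%:E)); last first.
    by move=> s _; apply: hgL.2.2.
  have mB : @measurable _ (OmegaU (~` future D)) B.
    apply: (sigmaF_mono _ hBD) => x /(po_nfut hD) [nD nf]; exact: nf.
  rewrite integral_indic // setIT; exact: hgD.2.2.
Qed.
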